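(* Let $(X,d)$ be a complete metric space, $0<\rho<1$, and $\mu(x,y)=x\#y$ a nonexpansive, coordinatewise $\rho$-contractive 2-mean on $X$ satisfying the limited medial property. Let $n\ge2$, $m\in X$, and $\mathbf{x}=(x_1,\ldots,x_n),\mathbf{y}=(y_1,\ldots,y_n)\in X^n$ with $x_i\#y_i=m$ for all $1\le i\le n$. Then $\mu_n(\mathbf{x})\#\mu_n(\mathbf{y})=m$.
   Context: A $k$-mean is a map $\mu:X^k\to X$ with $\mu(x,\ldots,x)=x$. Nonexpansive: $d(\mu(\mathbf{x}),\mu(\mathbf{y}))\le\max_j d(x_j,y_j)$; coordinatewise $\rho$-contractive: $d(\mu(\mathbf{x}),\mu(\mathbf{y}))\le\rho\,d(x_j,y_j)$ when $\mathbf{x},\mathbf{y}$ differ only in coordinate $j$. A 2-mean $\#$ has the limited medial property if $a\#b=x\#y=m$ implies $(a\#x)\#(b\#y)=m$. $\mu_2=\mu$, and $\mu_{n+1}$ is the unique continuous $\beta$-extension of $\mu_n$, where for a $k$-mean $\mu$ the barycentric operator is $\beta(\mathbf{z})_j=\mu(z_1,\ldots,\widehat{z_j},\ldots,z_{k+1})$ and a $(k+1)$-mean $\tilde\mu$ $\beta$-extends $\mu$ if $\beta^r(\mathbf{z})\to(\tilde\mu(\mathbf{z}),\ldots,\tilde\mu(\mathbf{z}))$ for all $\mathbf{z}$. *)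

(* Defs.v *)
From mathcomp Require Import all_boot all_order all_algebra.
From mathcomp Require Import reals.
Set Implicit Arguments. Unset Strict Implicit. Unset Printing Implicit Defensive.
Import Order.TTheory GRing.Theory Num.Theory.
Local Open Scope ring_scope.

Section Defs.
Variables (R : realType) (X : Type) (d : X -> X -> R).

Definition is_metric : Prop :=
  (forall x y, d x y = 0 <-> x = y) /\
  (forall x y, d x y = d y x) /\
  (forall x y z, d x z <= d x y + d y z).

Definition seq_conv (u : nat -> X) (l : X) : Prop :=
  forall e : R, 0 < e -> exists N : nat, forall n : nat, (N <= n)%N -> d (u n) l < e.

Definition is_cauchy (u : nat -> X) : Prop :=
  forall e : R, 0 < e -> exists N : nat, forall m n : nat,
    (N <= m)%N -> (N <= n)%N -> d (u m) (u n) < e.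

Definition complete_metric : Prop :=
  forall u : nat -> X, is_cauchy u -> exists l, seq_conv u l.

Definition continuous_k (k : nat) (mu : ('I_k -> X) -> X) : Prop :=
  forall (z : 'I_k -> X) (e : R), 0 < e -> exists2 del : R, 0 < del &
    forall w : 'I_k -> X, (forall j, d (z j) (w j) < del) -> d (mu z) (mu w) < e.

Definition beta (k : nat) (mu : ('I_k -> X) -> X) (z : 'I_k.+1 -> X) : 'I_k.+1 -> X :=
  fun j => mu (fun i => z (lift j i)).

Definition beta_extends (k : nat) (mu : ('I_k -> X) -> X) (mu' : ('I_k.+1 -> X) -> X) : Prop :=
  forall z : 'I_k.+1 -> X, forall j : 'I_k.+1,
    seq_conv (fun r => iter r (beta mu) z j) (mu' z).

Definition is_2mean (op : X -> X -> X) : Prop := forall x, op x x = x.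

Definition nonexpansive2 (op : X -> X -> X) : Prop :=
  forall a b x y, d (op a b) (op x y) <= Num.max (d a x) (d b y).

Definition coord_contractive2 (rho : R) (op : X -> X -> X) : Prop :=
  (forall a x b, d (op a b) (op x b) <= rho * d a x) /\
  (forall a b y, d (op a b) (op a y) <= rho * d b y).

Definition limited_medial (op : X -> X -> X) : Prop :=
  forall a b x y m, op a b = m -> op x y = m -> op (op a x) (op b y) = m.

End Defs.

(* Main.v *)
Require Import Defs.
From mathcomp Require Import all_boot all_order all_algebra.
From mathcomp Require Import reals.
Import Order.TTheory GRing.Theory Num.Theory.
Local Open Scope ring_scope.

Theorem proposition8p8 (R : realType) (X : Type) (d : X -> X -> R)
  (rho : R) (op : X -> X -> X)
  (mus : forall k : nat, ('I_k -> X) -> X) :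
  is_metric d -> complete_metric d ->
  0 < rho -> rho < 1 ->
  is_2mean op -> nonexpansive2 d op -> coord_contractive2 d rho op ->
  limited_medial op ->
  (forall z : 'I_2 -> X, mus 2%N z = op (z ord0) (z ord_max)) ->
  (forall k : nat, (2 <= k)%N ->
     continuous_k d (mus k.+1) /\ beta_extends d (mus k) (mus k.+1)) ->
  forall (n : nat), (2 <= n)%N ->
  forall (m : X) (x y : 'I_n -> X),
    (forall i : 'I_n, op (x i) (y i) = m) ->
    op (mus n x) (mus n y) = m.
Proof.
move=> [d0 [dsym dtri]] _ _ _ _ nexp _ lmed mu2 hext.
have dge0 : forall a b, 0 <= d a b.
  move=> a b; have := dtri a b a; rewrite (proj2 (d0 a a) erefl) (dsym b a).
  by rewrite -mulr2n pmulrn_lge0.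
elim=> [//|n IH] hn m x y hxy.
case: n IH hn x y hxy => [//|[|n]] IH hn x y hxy.
  rewrite !mu2; apply: lmed; exact: hxy.
have hn2 : (2 <= n.+2)%N by [].
have {}IH := IH hn2.
have [_ hb] := hext _ hn2.
set f := beta (mus n.+2).
have inv : forall r j, op (iter r f x j) (iter r f y j) = m.
  elim=> [|r IHr] j /=; first exact: hxy.
  by rewrite /f /beta; apply: IH => i; apply: IHr.
set L := op _ _.
suff : d m L = 0 by move/d0.
have := dge0 m L; rewrite le_eqVlt => /orP[/eqP -> //|he].
exfalso; set e := d m L in he.
have [N1 h1] := hb x ord0 e he.
have [N2 h2] := hb y ord0 e he.
have hN1 : (N1 <= maxn N1 N2)%N by rewrite leq_maxl.
have hN2 : (N2 <= maxn N1 N2)%N by rewrite leq_maxr.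
suff : e < e by rewrite ltxx.
rewrite {1}/e -(inv (maxn N1 N2) ord0).
apply: le_lt_trans (nexp _ _ _ _) _.
rewrite gt_max; apply/andP; split; [exact: h1|exact: h2].
Qed.
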